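(* Let $s,k$ be integers with $1\leq k<s$. The Laplacian spectrum of the spider $T(s,k)$ is $$\{0^{[1]},\ \theta^{[k-1]},\ \lambda_1^{[1]},\ 1^{[s-k-1]},\ \lambda_2^{[1]},\ \overline{\theta}^{[k-1]},\ \lambda_3^{[1]}\},$$ where $\theta=\frac{3-\sqrt{5}}{2}$, $\overline{\theta}=\frac{3+\sqrt{5}}{2}$, and $\lambda_1,\lambda_2,\lambda_3$ are the roots of $x^3-(s+4)x^2+(3s+4)x-(s+k+1)$.
   Context: For a graph $G$, the Laplacian matrix is $L(G)=D(G)-A(G)$, with $D(G)$ the diagonal degree matrix and $A(G)$ the adjacency matrix; its Laplacian spectrum is the multiset of eigenvalues of $L(G)$, and $a^{[m]}$ denotes the eigenvalue $a$ with multiplicity $m$ (listed values may coincide, in which case multiplicities add). For integers $1\leq k\leq s$, the spider $T(s,k)$ is the tree obtained from the star $K_{1,s}$ by extending $k$ of its $s$ rays by one extra edge each; it has $s+k+1$ vertices. *)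

(* Defs.v *)
From HB Require Import structures.
From mathcomp Require Import all_boot all_order all_algebra.
Set Implicit Arguments. Unset Strict Implicit. Unset Printing Implicit Defensive.
Import Order.TTheory GRing.Theory Num.Theory.
Local Open Scope ring_scope.

(* A simple graph on a finite vertex type is a symmetric irreflexive relation. *)
Definition degree (T : finType) (adj : rel T) (v : T) : nat := #|[set w | adj v w]|.

Definition laplacian (R : pzRingType) (n : nat) (adj : rel 'I_n) : 'M[R]_n :=
  \matrix_(i, j) ((if i == j then (degree adj i)%:R else 0) - (adj i j)%:R).

Definition has_spectrum (R : comNzRingType) (n : nat) (A : 'M[R]_n) (sp : seq R) : Prop :=
  char_poly A = \prod_(a <- sp) ('X - a%:P).

(* Spider T(s,k): vertices 0..s+k; 0 is the centre, 1..s are the ray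
   vertices adjacent to the centre, and for 1 <= i <= k the vertex s+i is
   the extra vertex attached to i. *)
Definition spider_edge (s k : nat) (a b : nat) : bool :=
  ((a == 0%N) && (0 < b <= s)%N) || ((0 < a <= k)%N && (b == a + s)%N).

Definition spider_adj (s k : nat) : rel 'I_(s + k + 1) :=
  fun i j => spider_edge s k i j || spider_edge s k j i.
Arguments spider_adj : clear implicits.
Arguments laplacian R {n} adj.

(* Main.v *)
Require Import Defs.
From HB Require Import structures.
From mathcomp Require Import all_boot all_order all_algebra.
From mathcomp Require Import zify ring lra.
Import Order.TTheory GRing.Theory Num.Theory.
Local Open Scope ring_scope.

Section Spider.
Variable R : rcfType.
Variables s k : nat.
Hypothesis hk1 : (1 <= k)%N.
Hypothesis hks : (k < s)%N.

Local Notation n := (s + k + 1)%N.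
Definition adjn (p q : nat) : bool := spider_edge s k p q || spider_edge s k q p.

Ltac alia := rewrite /adjn /spider_edge /=; lia.

Definition nb (p : nat) (G : nat -> R) : R :=
  if p == 0%N then \sum_(1 <= l < s.+1) G l
  else if (p <= k)%N then G 0%N + G (p + s)%N
  else if (p <= s)%N then G 0%N else G (p - s)%N.

Lemma sum_ind1 t (G : nat -> R) : (t < n)%N ->
  \sum_(l < n) (if (l == t :> nat) then 1 else 0) * G l = G t.
Proof.
move=> ht; rewrite (bigD1 (Ordinal ht)) //= eqxx mul1r big1 ?addr0 // => i hi.
case: eqP => [h|]; last by rewrite mul0r.
by case/eqP: hi; apply/val_inj.
Qed.

Lemma nbr_sum (G : nat -> R) (i : 'I_n) :
  \sum_(l < n) (adjn i l)%:R * G l = nb i G.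
Proof.
rewrite /nb; have hi := ltn_ord i.
case: (eqVneq (i : nat) 0%N) => [h0|hn0].
  rewrite h0 -(big_mkord xpredT (fun l => (adjn 0 l)%:R * G l)).
  rewrite (big_cat_nat _ (n:=1)) //=; last by lia.
  rewrite (big_cat_nat _ (m:=1) (n:=s.+1)) //=; try lia.
  rewrite big_nat1 (_ : adjn 0 0 = false) ?mul0r ?add0r; last by alia.
  rewrite [X in _ + X]big_nat_cond [X in _ + X]big1 ?addr0; last first.
    move=> l /andP[hl _]; rewrite (_ : adjn 0 l = false) ?mul0r //; alia.
  apply: eq_big_nat => l hl; rewrite (_ : adjn 0 l = true) ?mul1r //; alia.
case: ifP => hik.
  rewrite -(@sum_ind1 (0) G) ?addn1 // -(@sum_ind1 (i + s) G); last by lia.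
  rewrite -big_split /=; apply: eq_bigr => l _.
  rewrite -mulrDl; congr (_ * _).
  have -> : adjn i l = (l == 0%N :> nat) || (l == (i + s)%N :> nat) by alia.
  case: (eqVneq (l:nat) 0%N) => h1; case: (eqVneq (l:nat) (i+s)%N) => h2; rewrite /= ?addr0 ?add0r //; lia.
case: ifP => his.
  rewrite -(@sum_ind1 (0) G) ?addn1 //; apply: eq_bigr => l _; congr (_ * _).
  have -> : adjn i l = (l == 0%N :> nat) by alia.
  by case: eqP.
rewrite -(@sum_ind1 (i - s) G); last by lia.
apply: eq_bigr => l _; congr (_ * _).
have -> : adjn i l = (l == (i - s)%N :> nat) by alia.
by case: eqP.
Qed.


Definition dg (p : nat) : R := if p == 0%N then s%:R else if (p <= k)%N then 2 else 1.

Lemma degR (i : 'I_n) : (degree (spider_adj s k) i)%:R = dg i.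
Proof.
rewrite /degree -sum1_card natr_sum big_mkcond /=.
have -> : dg i = nb i (fun _ => 1).
  rewrite /dg /nb; case: ifP => _; first by rewrite sumr_const_nat subSS subn0.
  by case: ifP => _ //; case: ifP.
rewrite -nbr_sum; apply: eq_bigr => l _; rewrite inE mulr1 /spider_adj.
by rewrite /adjn; case: (_ || _).
Qed.

Section X.
Variable x : R.
Hypothesis ha : x - 1 != 0.
Hypothesis hb : (x - 1) * (x - 2) - 1 != 0.

Definition bp : R := x - 2 - 1 / (x - 1).
Lemma hbp : bp != 0.
Proof.
apply: contra hb => /eqP h; apply/eqP.
have -> : (x - 1) * (x - 2) - 1 = bp * (x - 1) by rewrite /bp; field.
by rewrite h mul0r.
Qed.

Definition Nf (p q : nat) : R :=
  if q == 0%N then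
    (if p == 0%N then 0 else if (p <= k)%N then - 1 / bp
     else if (p <= s)%N then - 1 / (x - 1) else 1 / ((x - 1) * bp))
  else if (q <= k)%N && (p == q + s)%N then - 1 / (x - 1) else 0.

Definition Ef (p q : nat) : R := (if p == q then 1 else 0) + Nf p q.

Definition Em : 'M[R]_n := \matrix_(i, j) Ef i j.
Definition Mm : 'M[R]_n := x%:M - laplacian R (spider_adj s k).

Lemma Mentry (i l : 'I_n) :
  Mm i l = (if i == l then x - dg i else 0) + (adjn i l)%:R.
Proof.
rewrite /Mm /laplacian !mxE degR.
case: eqP => [->|hne]; rewrite /= ?mulr1n ?mulr0n.
  have hll : spider_adj s k l l = false by rewrite /spider_adj; alia.
  have hll' : adjn l l = false by alia.
  by rewrite hll hll' /= subr0 addr0.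
by rewrite !sub0r opprK add0r.
Qed.

Lemma Uentry (i j : 'I_n) :
  (Mm *m Em) i j = (x - dg i) * Ef i j + nb i (fun l => Ef l j).
Proof.
rewrite !mxE.
under eq_bigr => l _ do rewrite Mentry mulrDl.
rewrite big_split /= -nbr_sum; congr (_ + _); last first.
  by apply: eq_bigr => l _; rewrite mxE.
rewrite (bigD1 i) //= eqxx mxE big1 ?addr0 // => l hl.
by rewrite eq_sym (negbTE hl) mul0r.
Qed.


Ltac splitifs := repeat (rewrite ?eqxx /=; case: ifP => ?); try (exfalso; lia).

Lemma U_low (i j : 'I_n) : (j < i)%N -> (Mm *m Em) i j = 0.
Proof.
move=> hji; have := ltn_ord i; rewrite Uentry /nb /Ef /Nf /dg => hi.
have hbp' := hbp; rewrite /bp in hbp' *.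
have hb' : (x - 2) * (x - 1) - 1 != 0 by rewrite mulrC.
splitifs.
all: try (field; rewrite ?ha ?hb' //).
Qed.

Lemma hbp2 : x - 2 - 1 / (x - 1) != 0. Proof. exact: hbp. Qed.
Lemma hb2 : (x - 2) * (x - 1) - 1 != 0. Proof. by rewrite mulrC. Qed.
Ltac fld := rewrite ?/bp; field; rewrite ?ha ?hb2 ?hbp2 //.

Definition Dg (p : nat) : R :=
  if p == 0%N then (x - s%:R) - k%:R / bp - (s - k)%:R / (x - 1)
  else if (p <= k)%N then bp else x - 1.

Lemma U_diag (i : 'I_n) : (Mm *m Em) i i = Dg i.
Proof.
have := ltn_ord i; rewrite Uentry => hi.
case: (eqVneq (i : nat) 0%N) => hi0.
  rewrite hi0 /nb /Dg /dg /Ef eqxx /=.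
  rewrite (big_cat_nat _ (n := k.+1)) //=; try lia.
  rewrite (eq_big_nat _ _ (F2 := fun _ => - 1 / bp)); last first.
    move=> l hl; rewrite /Nf /=.
    have -> : (l == 0%N) = false by lia.
    have -> : (l <= k)%N by lia.
    by rewrite add0r.
  rewrite [X in _ + (_ + X)](eq_big_nat _ _ (F2 := fun _ => - 1 / (x - 1))); last first.
    move=> l hl; rewrite /Nf /=.
    have -> : (l == 0%N) = false by lia.
    have -> : (l <= k)%N = false by lia.
    have -> : (l <= s)%N by lia.
    by rewrite add0r.
  rewrite !sumr_const_nat /Nf eqxx addr0 mulr1 subSS subn0.
  rewrite -(mulr_natr (-1/bp)) -(mulr_natr (-1/(x-1))); field; rewrite ?ha ?hbp //.
rewrite /nb /Ef /Nf /dg /Dg (negbTE hi0).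
splitifs.
all: try fld.
Qed.

Lemma E_up (i j : 'I_n) : (i < j)%N -> Em i j = 0.
Proof. move=> hij; rewrite mxE /Ef /Nf; splitifs; by rewrite addr0. Qed.

Lemma E_diag (i : 'I_n) : Em i i = 1.
Proof. rewrite mxE /Ef /Nf; splitifs; by rewrite addr0. Qed.

Lemma detM : \det Mm = Dg 0 * bp ^+ k * (x - 1) ^+ (s - k) * (x - 1) ^+ k.
Proof.
have hE : \det Em = 1.
  rewrite det_trig; last by apply/is_trig_mxP => i j; apply: E_up.
  by rewrite big1 // => i _; rewrite E_diag.
have := det_mulmx Mm Em; rewrite hE mulr1 => <-.
rewrite -det_tr det_trig; last first.
  by apply/is_trig_mxP => i j hij; rewrite mxE U_low.
under eq_bigr => i _ do rewrite mxE U_diag.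
rewrite -(big_mkord xpredT Dg).
rewrite (big_cat_nat _ (n := 1)) //= ?big_nat1; try lia.
rewrite (big_cat_nat _ (m := 1) (n := k.+1)) //=; try lia.
rewrite (big_cat_nat _ (m := k.+1) (n := s.+1)) //=; try lia.
rewrite (eq_big_nat _ _ (F2 := fun _ => bp)); last first.
  by move=> l hl; rewrite /Dg; splitifs.
rewrite [X in _ * (_ * (X * _))](eq_big_nat _ _ (F2 := fun _ => x - 1)); last first.
  by move=> l hl; rewrite /Dg; splitifs.
rewrite [X in _ * (_ * (_ * X))](eq_big_nat _ _ (F2 := fun _ => x - 1)); last first.
  by move=> l hl; rewrite /Dg; splitifs.
rewrite !prodr_const_nat !mulrA subSS subn0 (_ : (s + k + 1 - s.+1 = k)%N); last by lia.
done.
Qed.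

End X.

Definition theta : R := (3 - Num.sqrt 5) / 2.
Definition thetab : R := (3 + Num.sqrt 5) / 2.
Definition cubic : {poly R} :=
  'X^3 - (s + 4)%:R *: 'X^2 + (3 * s + 4)%:R *: 'X - ((s + k + 1)%:R)%:P.
Definition Pp : {poly R} :=
  'X * (('X - theta%:P) * ('X - thetab%:P)) ^+ (k - 1) * ('X - 1) ^+ (s - k - 1) * cubic.

Lemma char_eval (x : R) :
  (char_poly (laplacian R (spider_adj s k))).[x] = \det (Mm x).
Proof.
rewrite /char_poly -horner_evalE -det_map_mx; congr (\det _).
apply/matrixP => i j; rewrite !mxE /=.
rewrite -[LHS]/(horner_eval x _) horner_evalE.
by rewrite !hornerE hornerMn hornerX.
Qed.

Lemma Q_eval (x : R) : (x - theta) * (x - thetab) = (x - 1) * (x - 2) - 1.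
Proof.
have h5 : Num.sqrt (5 : R) ^+ 2 = 5 by rewrite sqr_sqrtr // ler0n.
rewrite /theta /thetab.
have -> : (x - (3 - Num.sqrt 5) / 2) * (x - (3 + Num.sqrt 5) / 2) =
  x ^+ 2 - 3 * x + (9 - Num.sqrt (5 : R) ^+ 2) / 4.
  by field.
by rewrite h5; field.
Qed.

Lemma P_eval (x : R) : x - 1 != 0 -> (x - 1) * (x - 2) - 1 != 0 ->
  Pp.[x] = \det (Mm x).
Proof.
move=> ha hb; rewrite detM // /Pp /cubic !hornerE Q_eval.
have ek : k = (k - 1).+1 by lia.
have esk : (s - k)%N = (s - k - 1).+1 by lia.
have eQ : (x - 1) * (x - 2) - 1 = bp x * (x - 1) by rewrite /bp; field.
rewrite eQ exprMn.
rewrite [in bp x ^+ k]ek [in (x - 1) ^+ k]ek esk !exprS.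
set A := bp x ^+ (k - 1); set B := (x - 1) ^+ (k - 1); set C := (x - 1) ^+ (s - k - 1).
have hbp : bp x != 0 by apply: hbp.
rewrite /Dg /= !natrD ?natrM natrB; last by lia.
rewrite subn1 /= -/C.
clearbody A B C.
have hbp' : x - 2 - 1/(x-1) != 0 := hbp.
have hb2 : (x - 2) * (x - 1) - 1 != 0 by rewrite mulrC.
rewrite /bp; field; rewrite ?ha ?hbp' ?hb2 //.
Qed.

Lemma charP : char_poly (laplacian R (spider_adj s k)) = Pp.
Proof.
apply/eqP; rewrite -subr_eq0; apply/negPn/negP => hne.
set p := _ - _ in hne.
suff : (size [seq (i + 3)%:R : R | i <- iota 0 (size p)] < size p)%N.
  by rewrite size_map size_iota ltnn.
apply: max_poly_roots hne _ _.
  apply/allP => y /mapP[i _ ->].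
  have h3 : 3 <= (i + 3)%:R :> R by rewrite ler_nat; lia.
  have ha : (i + 3)%:R - 1 != 0 :> R.
    by rewrite lt0r_neq0 // subr_gt0 (lt_le_trans _ h3) // ltr1n.
  have hb : ((i + 3)%:R - 1) * ((i + 3)%:R - 2) - 1 != 0 :> R.
    rewrite lt0r_neq0 //; nra.
  by rewrite /root /p hornerD hornerN char_eval P_eval // subrr.
rewrite map_inj_uniq ?iota_uniq // => a b /eqP; rewrite eqr_nat => /eqP; lia.
Qed.

Lemma cubic_eval (y : R) : cubic.[y] =
  y ^+ 3 - (s%:R + 4) * y ^+ 2 + (3 * s%:R + 4) * y - (s%:R + k%:R + 1).
Proof. rewrite /cubic !(hornerD, hornerN, hornerZ, hornerXn, hornerX, hornerC) !natrD ?natrM; ring. Qed.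

Lemma cubic_split : exists l1 l2 l3 : R,
  cubic = ('X - l1%:P) * ('X - l2%:P) * ('X - l3%:P).
Proof.
have hK : 1 <= k%:R :> R by rewrite ler1n.
have hS : k%:R + 1 <= s%:R :> R by rewrite natr1 ler_nat.
have [l1 /andP[h10 h11] r1] : exists2 l : R, 0 <= l <= 1 & root cubic l.
  by apply: poly_ivt; rewrite ?ler01 // !cubic_eval; apply/andP; split; nra.
have [l2 /andP[h21 h23] r2] : exists2 l : R, 1 <= l <= 3 & root (- cubic) l.
  by apply: poly_ivt; rewrite ?ler1n // !hornerN !cubic_eval; apply/andP; split; nra.
rewrite rootN in r2.
have [l3 /andP[h33 h3s] r3] : exists2 l : R, 3 <= l <= s%:R + 4 & root cubic l.
  by apply: poly_ivt; rewrite ?cubic_eval; [nra | apply/andP; split; nra].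
have c1 : cubic.[1] != 0 by rewrite cubic_eval; apply/eqP; nra.
have c3 : cubic.[3] != 0 by rewrite cubic_eval; apply/eqP; nra.
have n12 : l1 != l2.
  apply/eqP => e; have e1 : l1 = 1 by apply/eqP; rewrite eq_le h11 e h21.
  by move/eqP: r1; rewrite e1; apply/eqP.
have n23 : l2 != l3.
  apply/eqP => e; have e3 : l2 = 3 by apply/eqP; rewrite eq_le h23 e h33.
  by move/eqP: r2; rewrite e3; apply/eqP.
have n13 : l1 != l3 by apply/eqP => e; nra.
exists l1, l2, l3.
set PR := \prod_(z <- [:: l1; l2; l3]) ('X - z%:P).
have ePR : PR = ('X - l1%:P) * ('X - l2%:P) * ('X - l3%:P).
  by rewrite /PR !big_cons big_nil mulr1 mulrA.
have sPR : size PR = 4%N by rewrite size_prod_XsubC.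
have mPR : lead_coef PR = 1 by apply/monicP; apply: monic_prod_XsubC.
have rPR : forall z, z \in [:: l1; l2; l3] -> root PR z.
  by move=> z hz; rewrite root_prod_XsubC.
clearbody PR.
move/eqP: r1 => r1; move/eqP: r2 => r2; move/eqP: r3 => r3; clear c1 c3.
rewrite -ePR; apply/eqP; rewrite -subr_eq0; apply/negPn/negP => hne.
have hsz : (size (cubic - PR)%R <= 3)%N.
  apply/leq_sizeP => j hj; rewrite coefB.
  case: (eqVneq j 3%N) => [->|hj3].
    have e3 : PR`_(size PR).-1 = 1 by rewrite -lead_coefE.
    rewrite sPR (_ : (4.-1 = 3)%N) // in e3.
    rewrite /cubic !(coefB, coefD, coefZ, coefXn, coefX, coefC) e3 /=.
    by rewrite !mulr0 !subr0 addr0 subrr.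
  have hz : forall i, (4 <= i)%N -> PR`_i = 0 by apply/leq_sizeP; rewrite sPR.
  have hPj : PR`_j = 0 by apply: hz; rewrite ltn_neqAle eq_sym hj3.
  apply: etrans (congr2 (fun a b => a - b) (erefl (cubic`_j)) hPj) _.
  rewrite subr0 /cubic coefB coefD !coefB !coefZ !coefXn !coefX coefC.
  have h2 : (j == 2%N) = false := gtn_eqF hj.
  have h1 : (j == 1%N) = false := gtn_eqF (ltn_trans (isT : (1 < 2)%N) hj).
  have h0 : (j == 0%N) = false := gtn_eqF (ltn_trans (isT : (0 < 2)%N) hj).
  rewrite (negbTE hj3) h2 h1 h0.
  by rewrite /= !mulr0 !subr0 addr0.
have : (size [:: l1; l2; l3] < size (cubic - PR)%R)%N.
  apply: (max_poly_roots hne).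
    apply/allP => z hz; rewrite rootE hornerD hornerN.
    have := rPR z hz; rewrite rootE => /eqP ->.
    move: hz; rewrite !inE => /or3P [] /eqP ->.
    - by rewrite r1 subr0.
    - by rewrite r2 subr0.
    - by rewrite r3 subr0.
  by rewrite /= !inE !negb_or n12 n13 n23.
move=> h; move: (leq_ltn_trans hsz h); rewrite ltnn.
done.
Qed.

End Spider.

Lemma iter_mulX (T : pzRingType) (y : T) n : iter n ( *%R y) 1 = y ^+ n.
Proof. by elim: n => //= n ->; rewrite exprS. Qed.

Theorem proposition3p2 (R : rcfType) (s k : nat) (hk1 : (1 <= k)%N) (hks : (k < s)%N) :
  let theta : R := (3 - Num.sqrt 5) / 2 in
  let thetab : R := (3 + Num.sqrt 5) / 2 in
  exists l1 l2 l3 : R,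
    'X^3 - (s + 4)%:R *: 'X^2 + (3 * s + 4)%:R *: 'X - ((s + k + 1)%:R)%:P
      = ('X - l1%:P) * ('X - l2%:P) * ('X - l3%:P)
    /\ has_spectrum (laplacian R (spider_adj s k))
         (nseq 1 0 ++ nseq (k - 1) theta ++ nseq 1 l1 ++ nseq (s - k - 1) 1
          ++ nseq 1 l2 ++ nseq (k - 1) thetab ++ nseq 1 l3).
Proof.
move=> th thb.
have [l1 [l2 [l3 hc]]] := @cubic_split R s k hk1 hks.
exists l1, l2, l3; split; first exact: hc.
rewrite /has_spectrum (@charP R s k hk1 hks) /Pp hc.
rewrite !big_cat /= !big_nseq !iter_mulX /th /thb /theta /thetab.
rewrite exprMn !big_seq1 polyC0 subr0.
set A := ('X - ((3 - Num.sqrt 5) / 2)%:P) ^+ (k - 1).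
set B := ('X - ((3 + Num.sqrt 5) / 2)%:P) ^+ (k - 1).
set C := ('X - 1) ^+ (s - k - 1).
set D1 := 'X - l1%:P. set D2 := 'X - l2%:P. set D3 := 'X - l3%:P.
clearbody A B C D1 D2 D3.
ring.
Qed.
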